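(* Every odd wheel is cycle-extendable.
   Context: An odd wheel is obtained from an odd cycle $u_0u_1\cdots u_{2k}u_0$ ($k\ge1$) by adding a new vertex $h$ and the edges $hu_i$ for all $i$. A matching covered graph (connected, at least two vertices, every edge in a perfect matching) is cycle-extendable if for every even cycle $C$ the graph $G-V(C)$ has a perfect matching. *)

(* Defs.v *)
From mathcomp Require Import all_boot all_order.
Set Implicit Arguments. Unset Strict Implicit. Unset Printing Implicit Defensive.

Definition simple_graph (T : finType) (adj : rel T) : Prop :=
  symmetric adj /\ irreflexive adj.

Definition is_edge (T : finType) (adj : rel T) (e : {set T}) : Prop :=
  exists x y, adj x y /\ e = [set x; y].

Definition perfect_matching_on (T : finType) (adj : rel T) (U : {set T})
    (M : {set {set T}}) : Prop :=
  (forall e, e \in M -> is_edge adj e /\ e \subset U) /\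
  (forall v, v \in U -> #|[set e in M | v \in e]| = 1).

Definition has_perfect_matching_on (T : finType) (adj : rel T) (U : {set T}) : Prop :=
  exists M, perfect_matching_on adj U M.

Definition connected_graph (T : finType) (adj : rel T) : Prop :=
  forall x y : T, connect adj x y.

Definition matching_covered (T : finType) (adj : rel T) : Prop :=
  connected_graph adj /\ 2 <= #|T| /\
  forall x y, adj x y ->
    exists M, perfect_matching_on adj [set: T] M /\ [set x; y] \in M.

Definition is_cycle (T : finType) (adj : rel T) (c : seq T) : Prop :=
  3 <= size c /\ uniq c /\ cycle adj c.

Definition is_even_cycle (T : finType) (adj : rel T) (c : seq T) : Prop :=
  is_cycle adj c /\ ~~ odd (size c).

Definition cycle_extendable (T : finType) (adj : rel T) : Prop :=
  matching_covered adj /\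
  forall c : seq T, is_even_cycle adj c ->
    has_perfect_matching_on adj (~: [set v in c]).

(* The odd wheel W_k on 'I_(2k+2): vertices 0..2k are the rim u_0..u_{2k}
   (an odd cycle of length 2k+1), vertex 2k+1 is the hub h. *)
Definition wheel_adj (k : nat) : rel 'I_(k.*2.+2) :=
  fun x y =>
    let n := k.*2.+1 in
    if (x == n :> nat) then (y < n)
    else if (y == n :> nat) then (x < n)
    else ((x.+1 %% n == y) || (y.+1 %% n == x)).

(* Main.v *)
Require Import Defs.
From mathcomp Require Import all_boot all_order zify.
Set Implicit Arguments. Unset Strict Implicit. Unset Printing Implicit Defensive.

Definition rv (k j : nat) : 'I_(k.*2.+2) := inord (j %% k.*2.+1).
Definition hub (k : nat) : 'I_(k.*2.+2) := ord_max.

Lemma rvK k j : nat_of_ord (rv k j) = j %% k.*2.+1.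
Proof. by rewrite /rv inordK // ltnS ltnW // ltn_pmod. Qed.

Lemma rv_mod k j : rv k (j %% k.*2.+1) = rv k j.
Proof. by rewrite /rv modn_mod. Qed.

Lemma rv_eq k i j : (rv k i == rv k j) = (i == j %[mod k.*2.+1]).
Proof.
apply/eqP/eqP => [H|H]; last by rewrite /rv H.
by have := congr1 (@nat_of_ord _) H; rewrite !rvK.
Qed.

Lemma rv_addl k a b : rv k (nat_of_ord (rv k a) + b) = rv k (a + b).
Proof. by apply/eqP; rewrite rv_eq rvK modnDml. Qed.

Lemma rv_n k j : rv k (j + k.*2.+1) = rv k j.
Proof. by apply/eqP; rewrite rv_eq modnDr. Qed.

Lemma rv_hub k j : (rv k j == hub k) = false.
Proof. apply/negbTE; rewrite -val_eqE /= rvK; by rewrite ltn_eqF // ltn_pmod. Qed.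

Lemma vert k (v : 'I_(k.*2.+2)) : v = hub k \/ v = rv k v.
Proof.
case: (ltngtP v k.*2.+1) => H.
- right; apply: val_inj => /=; rewrite rvK modn_small //.
- by have := ltn_ord v; rewrite ltnS leqNgt H.
- by left; apply: val_inj.
Qed.
Lemma hubK k : nat_of_ord (hub k) = k.*2.+1. Proof. by []. Qed.

Lemma adj_hub_l k j : wheel_adj (hub k) (rv k j).
Proof. by rewrite /wheel_adj hubK eqxx rvK ltn_pmod. Qed.

Lemma adj_hub_r k j : wheel_adj (rv k j) (hub k).
Proof. by rewrite /wheel_adj hubK rvK eqxx ltn_pmod // ltn_eqF // ltn_pmod. Qed.
Lemma mod_neq k a : (a %% k.*2.+1 == k.*2.+1) = false.
Proof. by apply: ltn_eqF; apply: ltn_pmod. Qed.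

Lemma modS1 n x : (x %% n).+1 %% n = (x + 1) %% n.
Proof. by rewrite -addn1 modnDml. Qed.

Lemma adj_rv k a b : wheel_adj (rv k a) (rv k b) =
  (rv k b == rv k (a + 1)) || (rv k a == rv k (b + 1)).
Proof.
rewrite [in RHS]rv_eq [X in _ = _ || X]rv_eq /wheel_adj.
rewrite (rvK k a) (rvK k b).
case: ifP => [H|_]; first by rewrite mod_neq in H.
case: ifP => [H|_]; first by rewrite mod_neq in H.
rewrite (modS1 _ a) (modS1 _ b) (eq_sym ((a + 1) %% _)) (eq_sym ((b + 1) %% _)).
by [].
Qed.

Lemma wheel_sym k : symmetric (@wheel_adj k).
Proof.
move=> x y; rewrite /wheel_adj.
have [Hx|Hx] := eqVneq (nat_of_ord x) k.*2.+1;
have [Hy|Hy] := eqVneq (nat_of_ord y) k.*2.+1.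
- by rewrite Hx Hy.
- by [].
- by [].
- by rewrite orbC.
Qed.

Definition arcs k b L := [seq rv k (b + j) | j <- iota 0 L].

Lemma size_arcs k b L : size (arcs k b L) = L.
Proof. by rewrite size_map size_iota. Qed.

Lemma arcs_cat k b L1 L2 : arcs k b (L1 + L2) = arcs k b L1 ++ arcs k (b + L1) L2.
Proof.
rewrite /arcs iotaD map_cat add0n; congr (_ ++ _).
rewrite -[in iota L1 _](addn0 L1) iotaDl -map_comp; apply: eq_map => j /=; by rewrite addnA.
Qed.

Lemma arcs_uniq k b L : L <= k.*2.+1 -> uniq (arcs k b L).
Proof.
move=> HL; rewrite map_inj_in_uniq ?iota_uniq // => i j; rewrite !mem_iota !add0n => Hi Hj.
move/eqP; rewrite rv_eq eqn_modDl !modn_small => [/eqP //| |]; exact: leq_trans HL.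
Qed.

Lemma aux_mod n b v : 0 < n -> (b + (v + n - b %% n)) %% n = v %% n.
Proof.
move=> Hn.
have Hr : b %% n <= v + n by apply: leq_trans (ltnW (ltn_pmod b Hn)) (leq_addl _ _).
rewrite {1}(divn_eq b n) -addnA (addnBA _ Hr) addnC.
by rewrite addKn addnC modnMDl modnDr.
Qed.

Lemma arcs_cover k b (v : 'I_(k.*2.+2)) : v != hub k -> v \in arcs k b k.*2.+1.
Proof.
move=> Hv; case: (vert v) => Hv'; first by rewrite Hv' eqxx in Hv.
apply/mapP; exists ((v + k.*2.+1 - b %% k.*2.+1) %% k.*2.+1).
  by rewrite mem_iota add0n ltn_pmod.
apply: (etrans Hv'); apply/eqP; rewrite rv_eq modnDmr.
by rewrite aux_mod.
Qed.

Lemma rimE k (v : 'I_(k.*2.+2)) : v != hub k -> rv k v = v.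
Proof. by case: (vert v) => H; [rewrite H eqxx | rewrite -H]. Qed.

Definition fwd k : rel 'I_(k.*2.+2) := fun a b => b == rv k (a + 1).
Definition bwd k : rel 'I_(k.*2.+2) := fun a b => a == rv k (b + 1).
Arguments fwd : clear implicits.
Arguments bwd : clear implicits.

Lemma adj_rim k (a b : 'I_(k.*2.+2)) : a != hub k -> b != hub k ->
  wheel_adj a b = fwd k a b || bwd k a b.
Proof. by move=> Ha Hb; rewrite -{1}(rimE Ha) -{1}(rimE Hb) adj_rv !rimE. Qed.

Lemma rim_dir k (p : seq 'I_(k.*2.+2)) : uniq p -> hub k \notin p ->
  sorted (@wheel_adj k) p -> sorted (fwd k) p \/ sorted (bwd k) p.
Proof.
elim: p => [|x s IH] Hu Hh Hs; first by left.
case: s IH Hu Hh Hs => [|y s] IH Hu Hh Hs; first by left.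
move: Hu => /= /andP [Hxn Hu].
move: Hh; rewrite in_cons negb_or => /andP [Hhx Hh].
move: Hs => /= /andP [Hxy Hp].
have Hx : x != hub k by rewrite eq_sym.
have Hy : y != hub k by move: Hh; rewrite in_cons negb_or eq_sym => /andP [].
have := IH Hu Hh Hp.
rewrite (adj_rim Hx Hy) in Hxy.
case: s IH Hxn Hu Hh Hp => [|z s] _ Hxn Hu Hh Hp.
  by case/orP: Hxy => H _; [left|right]; rewrite /= H.
move: Hxn; rewrite !in_cons !negb_or => /andP [_ /andP [Hxz _]].
have Hz : z != hub k.
  by move: Hh; rewrite !in_cons !negb_or => /and3P [_ H _]; rewrite eq_sym.
case => /= /andP [Hyz Hs].
- case/orP: Hxy => H; first by left; rewrite /= H Hyz Hs.
  by move: Hxz; rewrite /bwd /fwd in H Hyz; rewrite (eqP Hyz) -(eqP H) eqxx.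
- case/orP: Hxy => H; last by right; rewrite /= H Hyz Hs.
  move: Hxz; rewrite /bwd /fwd in H Hyz.
  move: Hyz; rewrite (eqP H) rv_eq eqn_modDr -rv_eq (rimE Hx) (rimE Hz).
  by move=> ->.
Qed.

Lemma arcs_rv k a L : arcs k (rv k a) L = arcs k a L.
Proof. by apply: eq_map => j; rewrite rv_addl. Qed.

Lemma arcsS k b L : arcs k b L.+1 = rv k b :: arcs k (b + 1) L.
Proof. by rewrite -[L.+1]add1n arcs_cat /arcs /= addn0. Qed.

Lemma fwd_arcs k x s : x != hub k -> path (fwd k) x s ->
  x :: s = arcs k x (size s).+1.
Proof.
elim: s x => [|y s IH] x Hx /=.
  by move=> _; rewrite /arcs /= addn0 rimE.
case/andP => /eqP Hy Hp.
have Hy' : y != hub k by rewrite Hy rv_hub.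
rewrite arcsS (rimE Hx) (IH y Hy' Hp) {1}Hy arcs_rv.
by [].
Qed.

Lemma pm_ext (T : finType) (adj : rel T) U M (x y : T) :
  perfect_matching_on adj U M -> adj x y -> x \notin U -> y \notin U ->
  perfect_matching_on adj ([set x; y] :|: U) ([set x; y] |: M).
Proof.
move=> [HM1 HM2] Hxy HxU HyU; split.
  move=> e; rewrite in_setU1 => /orP [/eqP -> | He].
    by split; [exists x, y | apply: subsetUl].
  by case: (HM1 e He) => H1 H2; split => //; apply: subset_trans H2 (subsetUr _ _).
move=> v; rewrite in_setU => /orP [Hv | Hv].
  rewrite -(cards1 [set x; y]); apply: eq_card => e; rewrite !inE.
  have [-> | Hne] := eqVneq e [set x; y]; first by rewrite Hv.
  rewrite /=; apply/negP => /andP [He Hve].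
  case: (HM1 e He) => _ /subsetP /(_ v Hve) HvU.
  move: Hv; rewrite !inE => /orP [] /eqP Hv'.
    by move: HxU; rewrite -Hv' HvU.
  by move: HyU; rewrite -Hv' HvU.
rewrite -(HM2 v Hv); apply: eq_card => e; rewrite !inE.
have [-> | Hne] := eqVneq e [set x; y]; last by [].
have -> : (v \in [set x; y]) = false.
  apply/negbTE; rewrite !inE; apply/negP => /orP [] /eqP Hv'.
    by move: HxU; rewrite -Hv' Hv.
  by move: HyU; rewrite -Hv' Hv.
by rewrite !andbF.
Qed.

Fixpoint Marc k b t : {set {set 'I_(k.*2.+2)}} :=
  match t with
  | 0 => set0
  | t'.+1 => [set rv k (b + t'.*2); rv k (b + t'.*2 + 1)] |: Marc k b t'
  end.

Lemma arc_pm k b t : t.*2 <= k.*2.+1 ->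
  perfect_matching_on (@wheel_adj k) [set v in arcs k b t.*2] (Marc k b t).
Proof.
elim: t => [|t IH] Ht /=.
  split => [e|v]; first by rewrite inE.
  by rewrite inE.
have Hu := arcs_uniq b Ht.
have E : arcs k b t.+1.*2 = arcs k b t.*2 ++ [:: rv k (b + t.*2); rv k (b + t.*2 + 1)].
  by rewrite doubleS -[t.*2.+2]addn2 arcs_cat /arcs /= !addn0.
have -> : [set v in arcs k b t.+1.*2] =
   [set rv k (b + t.*2); rv k (b + t.*2 + 1)] :|: [set v in arcs k b t.*2].
  by apply/setP => v; rewrite E !inE mem_cat !inE orbC.
rewrite E cat_uniq /= !negb_or in Hu.
case/and3P: Hu => Hu1 /and3P [H1 H2 _] _.
apply: pm_ext.
- apply: IH; apply: leq_trans Ht; rewrite doubleS; exact: leqW (leqW (leqnn _)).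
- by rewrite adj_rv eqxx.
- by rewrite inE.
- by rewrite inE.
Qed.

Lemma Marc_first k b t : 0 < t -> [set rv k b; rv k (b + 1)] \in Marc k b t.
Proof.
elim: t => [|t IH] // _ /=; rewrite inE.
case: t IH => [|t] IH; first by rewrite double0 addn0 in_set1 eqxx.
by rewrite IH ?orbT.
Qed.

Lemma hub_notin_arcs k b L : hub k \notin arcs k b L.
Proof. by apply/mapP => [[j _ /eqP]]; rewrite eq_sym rv_hub. Qed.

Lemma full_pm k b :
  perfect_matching_on (@wheel_adj k) [set: 'I_(k.*2.+2)]
    ([set hub k; rv k (b + k.*2)] |: Marc k b k).
Proof.
have E : arcs k b k.*2.+1 = arcs k b k.*2 ++ [:: rv k (b + k.*2)].
  by have := arcs_cat k b k.*2 1; rewrite addn1 => ->; rewrite /arcs /= addn0.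
have Hu := arcs_uniq b (leqnn k.*2.+1).
rewrite E cat_uniq /= orbF andbT in Hu; case/andP: Hu => _ Hn.
have -> : [set: 'I_(k.*2.+2)] =
   [set hub k; rv k (b + k.*2)] :|: [set v in arcs k b k.*2].
  apply/setP => v; rewrite !inE.
  have [-> //|Hv] := eqVneq v (hub k).
  by have := arcs_cover b Hv; rewrite E mem_cat inE orbC.
apply: pm_ext.
- by apply: arc_pm; apply: leqnSn.
- exact: adj_hub_l.
- by rewrite inE hub_notin_arcs.
- by rewrite inE.
Qed.

Lemma hub_adj_hub k : wheel_adj (hub k) (hub k) = false.
Proof. by rewrite /wheel_adj hubK eqxx ltnn. Qed.

Lemma edge_hub k y : wheel_adj (hub k) y ->
  exists M, perfect_matching_on (@wheel_adj k) [set: 'I_(k.*2.+2)] M /\ [set hub k; y] \in M.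
Proof.
move=> H; have Hy : y != hub k by apply/eqP => E; rewrite E hub_adj_hub in H.
exists ([set hub k; rv k (y + 1 + k.*2)] |: Marc k (y + 1) k); split; first exact: full_pm.
by rewrite -addnA add1n rv_n rimE // setU11.
Qed.

Lemma edge_rim k x : 0 < k -> x != hub k ->
  exists M, perfect_matching_on (@wheel_adj k) [set: 'I_(k.*2.+2)] M /\ [set x; rv k (x + 1)] \in M.
Proof.
move=> Hk Hx; exists ([set hub k; rv k (x + k.*2)] |: Marc k x k); split; first exact: full_pm.
by rewrite setU1r // -{1}(rimE Hx) Marc_first.
Qed.

Lemma mcov k : 0 < k -> matching_covered (@wheel_adj k).
Proof.
move=> Hk; split; [|split].
- move=> x y; apply: (@connect_trans _ _ (hub k)).
    have [->|Hx] := eqVneq x (hub k); first exact: connect0.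
    by apply: connect1; rewrite -(rimE Hx) adj_hub_r.
  have [->|Hy] := eqVneq y (hub k); first exact: connect0.
  by apply: connect1; rewrite -(rimE Hy) adj_hub_l.
- by rewrite card_ord.
- move=> x y Hxy.
  have [Ex|Hx] := eqVneq x (hub k); first by rewrite Ex in Hxy *; exact: edge_hub.
  have [Ey|Hy] := eqVneq y (hub k).
    by rewrite setUC Ey; apply: edge_hub; rewrite -Ey wheel_sym.
  rewrite adj_rim // in Hxy; case/orP: Hxy => /eqP E.
    by rewrite E; apply: edge_rim.
  by rewrite setUC E; apply: edge_rim.
Qed.

Lemma rim_size k (p : seq 'I_(k.*2.+2)) : uniq p -> hub k \notin p -> size p <= k.*2.+1.
Proof.
move=> Hu Hh.
have H : {subset p <= arcs k 0 k.*2.+1}.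
  by move=> v Hv; apply: arcs_cover; apply: contraNneq Hh => <-.
by have := uniq_leq_size Hu H; rewrite size_arcs.
Qed.

Lemma fwd_sorted_arcs k (p : seq 'I_(k.*2.+2)) : hub k \notin p -> sorted (fwd k) p ->
  exists y, p = arcs k y (size p).
Proof.
case: p => [|x s]; first by exists 0.
rewrite inE negb_or => /andP [Hx _] Hp; exists x.
by apply: fwd_arcs; rewrite // eq_sym.
Qed.

Lemma rim_arc k (p : seq 'I_(k.*2.+2)) : uniq p -> hub k \notin p ->
  sorted (@wheel_adj k) p -> exists y, p =i arcs k y (size p).
Proof.
move=> Hu Hh Hs; case: (rim_dir Hu Hh Hs) => H.
  by case: (fwd_sorted_arcs Hh H) => y E; exists y; rewrite {1}E.
have H' : sorted (fwd k) (rev p) by rewrite rev_sorted.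
have Hh' : hub k \notin rev p by rewrite mem_rev.
case: (fwd_sorted_arcs Hh' H') => y E; exists y => v.
by rewrite -mem_rev E size_rev.
Qed.

Lemma eqmod_self d y a : (y == y + a %[mod d]) = (0 == a %[mod d]).
Proof. by rewrite -{1}(addn0 y) eqn_modDl. Qed.

Lemma fwd_cycle_size k (c : seq 'I_(k.*2.+2)) : 0 < k -> 3 <= size c -> uniq c ->
  cycle (@wheel_adj k) c -> hub k \notin c -> sorted (fwd k) c -> size c = k.*2.+1.
Proof.
move=> Hk H3 Hu Hc Hh Hs.
have Hm := rim_size Hu Hh.
case: (fwd_sorted_arcs Hh Hs) => y E.
move: Hc Hm H3; rewrite E size_arcs; move: (size c) => m.
case: m => [|[|[|m]]] //.
rewrite -[m.+3]addn1 arcs_cat cycle_catC !addn1 arcsS /= addn0 => /andP [Hadj _] Hm _.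
rewrite adj_rv !rv_eq -addnA eqmod_self eqn_modDl in Hadj.
have Hn1 : 1 < k.*2.+1 by rewrite ltnS -(addnn k) (leq_trans Hk) // leq_addr.
case/orP: Hadj.
  rewrite mod0n addn1 eq_sym => Hd.
  apply/eqP; rewrite eqn_leq Hm /=; apply: dvdn_leq => //.
by rewrite !modn_small.
Qed.


Lemma cycle_sorted (T : eqType) (e : rel T) c : cycle e c -> sorted e c.
Proof. by case: c => //= x s; rewrite rcons_path => /andP []. Qed.

Lemma even_cycle_hub k c : 0 < k -> is_even_cycle (@wheel_adj k) c -> hub k \in c.
Proof.
move=> Hk [[H3 [Hu Hc]] Hev]; apply/negPn/negP => Hh.
have Hodd : odd k.*2.+1 by rewrite /= odd_double.
case: (rim_dir Hu Hh (cycle_sorted Hc)) => Hs.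
  by move: Hev; rewrite (fwd_cycle_size Hk H3 Hu Hc Hh Hs) Hodd.
have Hc' : cycle (@wheel_adj k) (rev c).
  by rewrite rev_cycle; rewrite (eq_cycle (e' := @wheel_adj k)) // => a b; rewrite wheel_sym.
have := @fwd_cycle_size k (rev c) Hk; rewrite size_rev rev_uniq mem_rev rev_sorted => H.
by move: Hev; rewrite (H H3 Hu Hc' Hh Hs) Hodd.
Qed.

Lemma compl_arc k y L : L <= k.*2.+1 ->
  ~: (hub k |: [set v in arcs k y L]) = [set v in arcs k (y + L) (k.*2.+1 - L)].
Proof.
move=> HL.
have E : arcs k y k.*2.+1 = arcs k y L ++ arcs k (y + L) (k.*2.+1 - L).
  by rewrite -arcs_cat subnKC.
have Hu := arcs_uniq y (leqnn k.*2.+1).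
rewrite E cat_uniq in Hu; case/and3P: Hu => _ Hdis _.
apply/setP => v; rewrite !inE negb_or.
have [->|Hv] := eqVneq v (hub k); first by apply/esym/negbTE/hub_notin_arcs.
rewrite /=; apply/idP/idP => H.
  by have := arcs_cover y Hv; rewrite E mem_cat (negbTE H).
by apply/negP => H'; move/hasP: Hdis; apply; exists v.
Qed.

Lemma cycle_pm k c : 0 < k -> is_even_cycle (@wheel_adj k) c ->
  has_perfect_matching_on (@wheel_adj k) (~: [set v in c]).
Proof.
move=> Hk Hc; have Hh := even_cycle_hub Hk Hc.
case: Hc => [[H3 [Hu Hcy]] Hev].
case: (rot_to Hh) => i q Er.
have Hu' : uniq (hub k :: q) by rewrite -Er rot_uniq.
have Hcy' : cycle (@wheel_adj k) (hub k :: q) by rewrite -Er rot_cycle.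
have Hsz : size c = (size q).+1 by rewrite -(size_rot i) Er.
case/andP: Hu' => Hhq Huq.
have Hsq : sorted (@wheel_adj k) q.
  by move: Hcy'; rewrite /= rcons_path => /andP [/path_sorted].
case: (rim_arc Huq Hhq Hsq) => y Eq.
have HL := rim_size Huq Hhq.
have -> : [set v in c] = hub k |: [set v in arcs k y (size q)].
  by apply/setP => v; rewrite !inE -(mem_rot i c v) Er in_cons -(Eq v).
rewrite compl_arc //.
have Hodd : ~~ odd (k.*2.+1 - size q).
  by rewrite oddB // /= odd_double; move: Hev; rewrite Hsz /= negbK => ->.
exists (Marc k (y + size q) (k.*2.+1 - size q)./2).
rewrite -{1}(even_halfK Hodd); apply: arc_pm.
by rewrite (even_halfK Hodd) leq_subr.
Qed.

Theorem proposition4p1 (k : nat) : 1 <= k -> cycle_extendable (@wheel_adj k).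
Proof.
move=> Hk; split; first exact: mcov.
by move=> c Hc; apply: cycle_pm.
Qed.
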